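(* Let $p\ge37$ be a prime, $\kappa>0$ and $\xi=\lfloor\sqrt p\rfloor$. Then any set $\mathcal{S}\subseteq\mathbb{F}_p$ of size $\#\mathcal{S}\ge16p^{2\kappa}$ contains pairwise disjoint subsets $\mathcal{D}_k$, $k=1,\ldots,K$, and $\mathcal{E}_\ell$, $\ell=1,\ldots,L$, such that (i) $\#\mathcal{D}_k,\#\mathcal{E}_\ell\ge0.25p^{-\kappa}(\#\mathcal{S})^{1/2}$ for all $k,\ell$; (ii) each $\mathcal{D}_k$ is a $\sqrt p/3$-spaced set; (iii) each set $\xi\mathcal{E}_\ell=\{\xi a~:~a\in\mathcal{E}_\ell\}$ is a $\sqrt p/3$-spaced set; (iv) $\#\big(\mathcal{S}\setminus(\mathcal{S}_0\cup\mathcal{S}_1)\big)\le2p^{-\kappa}\#\mathcal{S}$, where $\mathcal{S}_0=\bigcup_{k=1}^K\mathcal{D}_k$ and $\mathcal{S}_1=\bigcup_{\ell=1}^L\mathcal{E}_\ell$.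
   Context: For $x\in\mathbb{F}_p$, $|x|$ denotes the minimum of the absolute values of the integers in the residue class of $x$ modulo $p$. A set $\mathcal{D}\subseteq\mathbb{F}_p$ is $\Delta$-spaced if $|d_1-d_2|\ge\Delta$ for any two distinct $d_1,d_2\in\mathcal{D}$. *)

(* Defs.v *)
From HB Require Import structures.
From mathcomp Require Import all_boot all_order all_algebra.
From mathcomp Require Import reals exp.
Set Implicit Arguments. Unset Strict Implicit. Unset Printing Implicit Defensive.
Import Order.TTheory GRing.Theory Num.Theory.
Local Open Scope ring_scope.

(* |x| for x in F_p: the least absolute value of an integer in the residue
   class of x, i.e. min(x, p - x) for the representative 0 <= x < p. *)
Definition absFp (p : nat) (x : 'F_p) : nat := minn (val x) (p - val x).

Definition spaced (R : realType) (p : nat) (Delta : R) (D : {set 'F_p}) : Prop :=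
  forall d1 d2, d1 \in D -> d2 \in D -> d1 != d2 -> Delta <= (absFp (d1 - d2))%:R.

Definition dilate (p : nat) (c : nat) (E : {set 'F_p}) : {set 'F_p} :=
  [set (c%:R * a) | a in E].

(* Main.v *)
Require Import Defs.
From HB Require Import structures.
From mathcomp Require Import all_boot all_order all_algebra.
From mathcomp Require Import reals exp.
From mathcomp Require Import zify lra.
Import Order.TTheory GRing.Theory Num.Theory.
Set Implicit Arguments. Unset Strict Implicit. Unset Printing Implicit Defensive.
Local Open Scope ring_scope.

Lemma floor_nat (R : realType) (x : R) : 0 <= x ->
  ((`|Num.floor x|%N)%:R <= x) /\ (x < (`|Num.floor x|%N)%:R + 1) /\
  (forall n : nat, n%:R <= x -> (n <= `|Num.floor x|%N)%N).
Proof.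
move=> x0; have f0 : (0 <= Num.floor x)%R by rewrite floor_ge0.
have E : (`|Num.floor x|%N)%:R = (Num.floor x)%:~R :> R.
  by rewrite natr_absz ger0_norm.
rewrite E; split; first exact: floor_le.
split; first by have := floorD1_gt x; rewrite intrD.
move=> n hn. have : (n%:Z <= Num.floor x)%R by rewrite floor_ge_int.
by rewrite -(gez0_abs f0) lez_nat.
Qed.

Lemma val_Fp_small p d : prime p -> (d < p)%N -> val (d%:R : 'F_p) = d.
Proof. by move=> pp dp; have := val_Fp_nat pp d; rewrite modn_small. Qed.

Lemma Fp_valK {p} (x : 'F_p) : prime p -> (val x)%:R = x.
Proof.
move=> pp; apply: val_inj; rewrite val_Fp_small //.
by have := ltn_ord x; rewrite -[X in (_ < X)%N]card_ord card_Fp.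
Qed.

Lemma absFp_mul p c (x y : 'F_p) : prime p -> (val y < val x)%N -> (0 < c)%N ->
  (c * (val x - val y) < p)%N ->
  absFp (c%:R * (x - y)) = minn (c * (val x - val y)) (p - c * (val x - val y)) /\
  absFp (c%:R * (y - x)) = minn (c * (val x - val y)) (p - c * (val x - val y)).
Proof.
move=> pp lt c0 lte; set e := (c * _)%N in lte *.
have e0 : (0 < e)%N by rewrite /e muln_gt0 c0 subn_gt0.
have ex : c%:R * (x - y) = e%:R :> 'F_p.
  have -> : x - y = (val x)%:R - (val y)%:R by rewrite !Fp_valK.
  by rewrite -natrB ?(ltnW lt) // -natrM.
split; first by rewrite /absFp ex val_Fp_small.
have ey : c%:R * (y - x) = (p - e)%:R :> 'F_p.
  by rewrite -opprB mulrN ex natrB ?(ltnW lte) // pchar_Fp_0 // sub0r.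
rewrite /absFp ey val_Fp_small //; last by rewrite ltn_subrL e0 (prime_gt0 pp).
by rewrite subKn ?(ltnW lte) // minnC.
Qed.

Definition blk p h (x : 'F_p) : nat := (val x %/ h)%N.
Definition Eset p h (S : {set 'F_p}) (j : nat) := [set y in S | blk h y == j].
Definition rnk p h (S : {set 'F_p}) (x : 'F_p) :=
  #|[set y in S | (blk h y == blk h x) && (val y < val x)%N]|.

Lemma rnk_lt p h (S : {set 'F_p}) x : x \in S -> (rnk h S x < #|Eset h S (blk h x)|)%N.
Proof.
move=> xS; rewrite /rnk /Eset.
have sub : x |: [set y in S | (blk h y == blk h x) && (val y < val x)%N] \subset
    [set y in S | blk h y == blk h x].
  apply/subsetP => z; rewrite !inE => /orP[/eqP->|/andP[-> /andP[-> _]]] //.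
  by rewrite xS eqxx.
have := subset_leq_card sub; rewrite cardsU1 inE ltnn !andbF /=.
by rewrite add1n.
Qed.

Lemma rnk_inj p h (S : {set 'F_p}) x y : x \in S -> y \in S ->
  blk h x = blk h y -> rnk h S x = rnk h S y -> x = y.
Proof.
move=> xS yS.
wlog lt : x y xS yS / (val y <= val x)%N.
  move=> W; case: (leqP (val y) (val x)) => [le|lt]; first exact: W.
  by move=> b r; apply/esym/W => //; apply: ltnW.
move=> b r; case: (ltnP (val y) (val x)) => [lt'|ge]; last first.
  by apply: val_inj; apply/eqP; rewrite eqn_leq lt ge.
have sub : y |: [set z in S | (blk h z == blk h y) && (val z < val y)%N] \subset
    [set z in S | (blk h z == blk h x) && (val z < val x)%N].
  apply/subsetP => z; rewrite !inE => /orP[/eqP->|/andP[-> /andP[/eqP -> zy]]].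
    by rewrite yS b eqxx lt'.
  by rewrite b eqxx (ltn_trans zy lt').
have := subset_leq_card sub; rewrite cardsU1 inE ltnn !andbF /= add1n.
by rewrite -/(rnk h S y) -/(rnk h S x) r ltnn.
Qed.

Lemma dist_far p h (x y : 'F_p) : prime p -> (0 < h)%N -> (val y < val x)%N ->
  (1 <= blk h y)%N -> (blk h y + 2 <= blk h x)%N ->
  (h.+1 <= absFp (x - y)%R)%N /\ (h.+1 <= absFp (y - x)%R)%N.
Proof.
move=> pp h0 lt b1 b2.
have xp : (val x < p)%N.
  by have := ltn_ord x; rewrite -[X in (_ < X)%N]card_ord card_Fp.
have l1 := leq_divM (val x) h; have l2 := leq_divM (val y) h.
have l3 := ltn_ceil (val y) h0.
move: b1 b2; rewrite /blk => b1 b2.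
have lte : (1 * (val x - val y) < p)%N by rewrite mul1n; lia.
have [e1 e2] := @absFp_mul p 1 x y pp lt isT lte.
rewrite mul1r in e1; rewrite mul1r in e2; rewrite e1 e2 mul1n.
have : (h * blk h y + 2 * h <= h * blk h x)%N.
  by rewrite (mulnC 2) -mulnDr leq_mul2l b2 orbT.
rewrite /blk; move=> hh.
have hy : (h <= h * (val y %/ h))%N by rewrite -{1}(muln1 h) leq_mul2l b1 orbT.
split; rewrite leq_min; apply/andP; split; nia.
Qed.

Lemma dist_near p h (x y : 'F_p) : (0 < h)%N -> (val y < val x)%N ->
  blk h x = blk h y -> (val x - val y < h)%N.
Proof.
move=> h0 lt; rewrite /blk => b.
have l1 := leq_divM (val y) h; have l3 := ltn_ceil (val x) h0.
rewrite b in l3; nia.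
Qed.

Lemma dist_E p h c (x y : 'F_p) : prime p -> (0 < h)%N -> (val y < val x)%N ->
  blk h x = blk h y -> (0 < c)%N -> (3 * (c * (h - 1)) <= p)%N ->
  ((c <= absFp (c%:R * (x - y))%R) || (p <= 3 * absFp (c%:R * (x - y))%R))%N /\
  ((c <= absFp (c%:R * (y - x))%R) || (p <= 3 * absFp (c%:R * (y - x))%R))%N.
Proof.
move=> pp h0 lt b c0 hp.
have d := dist_near h0 lt b.
have hh : (c * (val x - val y) <= c * (h - 1))%N by rewrite leq_mul2l; apply/orP; right; lia.
have c1 : (c <= c * (val x - val y))%N by rewrite -{1}(muln1 c) leq_mul2l; apply/orP; right; lia.
have lte : (c * (val x - val y) < p)%N by lia.
have [-> ->] := absFp_mul pp lt c0 lte.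
by split; rewrite /minn; case: ifP => _; apply/orP; [left|right|left|right]; lia.
Qed.

Lemma card_bigcup_le (T I : finType) (P : pred I) (F : I -> {set T}) :
  (#|\bigcup_(i | P i) F i| <= \sum_(i | P i) #|F i|)%N.
Proof.
elim/big_rec2: _ => [|i A n _ le]; first by rewrite cards0. apply: leq_trans (leq_card_setU _ _) _.
by rewrite leq_add2l.
Qed.

Definition cls (j : nat) : nat := if j == 0%N then 2%N else (j %% 2)%N.

Lemma D_space p h (S : {set 'F_p}) c r (x y : 'F_p) : prime p -> (0 < h)%N ->
  x \in S -> y \in S -> cls (blk h x) = c -> cls (blk h y) = c ->
  rnk h S x = r -> rnk h S y = r -> x != y ->
  (h.+1 <= absFp (x - y)%R)%N.
Proof.
move=> pp h0 xS yS cx cy rx ry ne.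
have bne : blk h x != blk h y.
  apply/negP => /eqP b; move/negP: ne; apply; apply/eqP.
  by apply: (rnk_inj xS yS b); rewrite rx ry.
have vne : val x != val y by apply: contra ne => /eqP/val_inj ->.
have key : forall u v : 'F_p, (val v < val u)%N -> cls (blk h u) = cls (blk h v) ->
    blk h u != blk h v ->
    (h.+1 <= absFp (u - v)%R)%N /\ (h.+1 <= absFp (v - u)%R)%N.
  move=> u v lt ce be; apply: dist_far => //.
    move: ce be; have : (blk h v <= blk h u)%N by rewrite /blk leq_div2r // ltnW.
    rewrite /cls; case: eqP => [->|]; case: eqP => //; try lia.
  have : (blk h v <= blk h u)%N by rewrite /blk leq_div2r // ltnW.
  move: ce be; rewrite /cls; case: eqP => [->|]; case: eqP => //; try lia.
case: (ltngtP (val y) (val x)) => [lt|lt|eq].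
- by have [] := key x y lt (etrans cx (esym cy)) bne.
- by have [] := key y x lt (etrans cy (esym cx)); rewrite // eq_sym.
- by move: vne; rewrite eq eqxx.
Qed.

Theorem lemma2p15 (R : realType) (p : nat) (kappa : R) (S : {set 'F_p}) :
  prime p -> (37 <= p)%N -> 0 < kappa ->
  let xi : nat := `|Num.floor (Num.sqrt (p%:R : R))|%N in
  16 * (p%:R `^ (2 * kappa)) <= (#|S|%:R : R) ->
  exists (K L : nat) (D : 'I_K -> {set 'F_p}) (E : 'I_L -> {set 'F_p}),
    [/\ (forall k, D k \subset S) /\ (forall l, E l \subset S),
        (forall k1 k2, k1 != k2 -> [disjoint D k1 & D k2]),
        (forall l1 l2, l1 != l2 -> [disjoint E l1 & E l2]),
        (forall k l, [disjoint D k & E l]) &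
     [/\ (forall k, 4^-1 * p%:R `^ (- kappa) * Num.sqrt (#|S|%:R) <= (#|D k|%:R : R)),
        (forall l, 4^-1 * p%:R `^ (- kappa) * Num.sqrt (#|S|%:R) <= (#|E l|%:R : R)),
        (forall k, spaced (Num.sqrt (p%:R : R) / 3) (D k)),
        (forall l, spaced (Num.sqrt (p%:R : R) / 3) (dilate xi (E l))) &
        (#|S :\: ((\bigcup_k D k) :|: (\bigcup_l E l))|%:R : R)
          <= 2 * p%:R `^ (- kappa) * #|S|%:R ]].
Proof.
move=> pp p37 k0 xi hS.
set n := #|S| in hS *.
set q := p%:R `^ (- kappa).
set s := Num.sqrt (n%:R : R).
set T := 4^-1 * q * s.
set sp := Num.sqrt (p%:R : R).
have p1 : (1 : R) <= p%:R by rewrite ler1n; lia.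
have q1 : q <= 1.
  by have := @ler_powR R _ p1 (- kappa) 0; rewrite powRr0; apply; lra.
have q0 : 0 <= q by apply: powR_ge0.
have P2 : 1 <= p%:R `^ (2 * kappa) :> R.
  by have := @ler_powR R _ p1 0 (2 * kappa); rewrite powRr0; apply; lra.
have n16 : 16 <= (n%:R : R) by lra.
have sq : forall a : R, 0 <= a -> Num.sqrt (a ^+ 2) = a.
  by move=> a a0; rewrite sqrtr_sqr ger0_norm.
have s4 : 4 <= s.
  by rewrite -(sq 4) // /s ler_sqrt ?expr2 //; lra.
have ss : s * s = n%:R by rewrite -expr2 sqr_sqrtr.
have sp6 : 6 <= sp.
  have : (36 : R) <= p%:R by rewrite ler_nat; lia.
  by rewrite -(sq 6) // /sp ler_sqrt // expr2; lra.
have spsp : sp * sp = p%:R by rewrite -expr2 sqr_sqrtr.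
have T0 : 0 <= T by rewrite /T !mulr_ge0 // ?invr_ge0; lra.
have [xile [xigt _]] := floor_nat (sqrtr_ge0 (p%:R : R)).
rewrite -/sp -/xi in xile xigt.
have xi2 : (xi * xi <= p)%N.
  rewrite -(ler_nat R) natrM -spsp; apply: ler_pM => //.
have xi5 : (5 <= xi)%N.
  rewrite -(ltr_nat R); lra.
set h := (xi %/ 3).+1.
have h0 : (0 < h)%N by [].
have h3 : (xi.+1 <= 3 * h)%N by rewrite /h mulnC; exact: ltn_ceil.
have hp : (3 * (xi * (h - 1)) <= p)%N.
  have := leq_divM xi 3; rewrite /h subn1 /=.
  move: (xi %/ 3)%N => t t3; clear -t3 xi2; nia.
pose heavy (j : nat) := T <= (#|Eset h S j|)%:R.
pose m := `|Num.floor T|%N.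
pose M := m.+1.
pose Dset (cr : 'I_3 * 'I_M) := [set x in S | ~~ heavy (blk h x) &&
   (cls (blk h x) == cr.1) && (rnk h S x == cr.2)].
pose selD := [seq cr <- enum {: 'I_3 * 'I_M} | T <= (#|Dset cr|)%:R].
pose selE := [seq j <- iota 0 p | heavy j].
have uD : uniq selD by rewrite filter_uniq // enum_uniq.
have uE : uniq selE by rewrite filter_uniq // iota_uniq.
exists (size selD), (size selE), (fun k => Dset (nth (ord0, ord0) selD k)),
  (fun l => Eset h S (nth 0%N selE l)).
split; [split|..|split].
- by move=> k; apply/subsetP => x; rewrite inE => /andP[].
- by move=> l; apply/subsetP => x; rewrite inE => /andP[].
- move=> k1 k2 ne.
  have : nth (ord0, ord0) selD k1 != nth (ord0, ord0) selD k2 by rewrite nth_uniq.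
  case: (nth _ selD k1) => a1 b1; case: (nth _ selD k2) => a2 b2 /= ne2.
  rewrite disjoint_subset; apply/subsetP => x.
  rewrite !inE => /andP[xS /andP[/andP[hv /eqP c1] /eqP r1]].
  apply/negP => /andP[_ /andP[/andP[_ /eqP c2] /eqP r2]].
  move/negP: ne2; apply; rewrite xpair_eqE -!val_eqE /=.
  by rewrite -c1 -c2 -r1 -r2 !eqxx.
- move=> l1 l2 ne.
  have : nth 0%N selE l1 != nth 0%N selE l2 by rewrite nth_uniq.
  move=> ne2; rewrite disjoint_subset; apply/subsetP => x.
  rewrite !inE => /andP[xS /eqP c1]; apply/negP => /andP[_ /eqP c2].
  by move/negP: ne2; apply; rewrite -c1 -c2.
- move=> k l; rewrite disjoint_subset; apply/subsetP => x.
  rewrite !inE => /andP[xS /andP[/andP[hv _] _]]; apply/negP => /andP[_ /eqP c2].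
  have := mem_nth 0%N (ltn_ord l); rewrite mem_filter => /andP[hh _].
  by move/negP: hv; apply; rewrite c2.
- move=> k; have := mem_nth (ord0, ord0) (ltn_ord k).
  by rewrite mem_filter => /andP[].
- move=> l; have := mem_nth 0%N (ltn_ord l).
  by rewrite mem_filter => /andP[].
- move=> k x y; rewrite !inE => /andP[xS /andP[/andP[_ /eqP c1] /eqP r1]].
  move=> /andP[yS /andP[/andP[_ /eqP c2] /eqP r2]] ne.
  have hd := D_space pp h0 xS yS c1 c2 r1 r2 ne.
  apply: le_trans (_ : sp / 3 <= (h.+1)%:R) _; last by rewrite ler_nat.
  have : ((xi.+1)%:R : R) <= (3 * h)%:R by rewrite ler_nat.
  rewrite -addn1 natrD natrM -(addn1 h) natrD; lra.
- have spp : sp <= p%:R by rewrite -spsp; nra.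
  have key : forall A : nat, ((xi <= A) || (p <= 3 * A))%N -> sp / 3 <= A%:R.
    move=> A /orP[] H.
      have : (xi%:R : R) <= A%:R by rewrite ler_nat.
      lra.
    have : (p%:R : R) <= (3 * A)%:R by rewrite ler_nat.
    rewrite natrM; lra.
  have xi0 : (0 < xi)%N by apply: leq_trans xi5.
  move=> l d1 d2; rewrite /dilate => /imsetP[a1 a1E ->] /imsetP[a2 a2E ->] ne.
  move: a1E a2E; rewrite !inE => /andP[a1S /eqP b1] /andP[a2S /eqP b2].
  have ne' : a1 != a2 by apply: contra ne => /eqP->.
  have vne : val a1 != val a2 by apply: contra ne' => /eqP/val_inj ->.
  rewrite -mulrBr.
  case: (ltngtP (val a2) (val a1)) => [lt|lt|eq].
  + have [H _] := dist_E pp h0 lt (etrans b1 (esym b2)) xi0 hp; exact: key H.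
  + have [_ H] := dist_E pp h0 lt (etrans b2 (esym b1)) xi0 hp; exact: key H.
  + by move: vne; rewrite eq eqxx.
have cover : S :\: ((\bigcup_(k < size selD) Dset (nth (ord0, ord0) selD k)) :|:
     (\bigcup_(l < size selE) Eset h S (nth 0%N selE l))) \subset
   \bigcup_(cr | ~~ (T <= (#|Dset cr|)%:R)) Dset cr.
  apply/subsetP => x; rewrite !inE negb_or => /andP[/andP[nD nE] xS].
  have lh : ~~ heavy (blk h x).
    apply/negP => hv; move/negP: nE; apply; apply/bigcupP.
    have ins : blk h x \in selE.
      rewrite mem_filter hv mem_iota /= add0n.
      have := ltn_ord x; rewrite -[X in (_ < X)%N]card_ord card_Fp // => xp.
      by apply: leq_ltn_trans xp; rewrite /blk leq_div.
    have il : (index (blk h x) selE < size selE)%N by rewrite index_mem.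
    by exists (Ordinal il) => //=; rewrite nth_index // inE xS eqxx.
  have c3 : (cls (blk h x) < 3)%N by rewrite /cls; case: ifP => // _; apply: (@leq_trans 2); rewrite ?ltn_mod.
  have rM : (rnk h S x < M)%N.
    have := rnk_lt h xS => rl.
    have : ((rnk h S x).+1%:R : R) <= T.
      have lt : (#|Eset h S (blk h x)|%:R : R) < T by move: lh; rewrite /heavy -ltNge.
      by apply: le_trans (ltW lt); rewrite ler_nat.
    have [_ [_ fl]] := floor_nat T0.
    by move/fl; rewrite /M /m ltnS => /ltnW.
  pose cr0 : 'I_3 * 'I_M := (Ordinal c3, Ordinal rM).
  have xD : x \in Dset cr0 by rewrite inE xS lh !eqxx.
  apply/bigcupP; exists cr0 => //; apply/negP => big.
  move/negP: nD; apply; apply/bigcupP.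
  have ins : cr0 \in selD by rewrite mem_filter big mem_enum.
  have il : (index cr0 selD < size selD)%N by rewrite index_mem.
  by exists (Ordinal il) => //=; rewrite nth_index.
have N := leq_trans (subset_leq_card cover) (card_bigcup_le _ _).
apply: le_trans (_ : ((\sum_(cr | ~~ (T <= (#|Dset cr|)%:R)) #|Dset cr|)%:R : R) <= _).
  by rewrite ler_nat.
rewrite natr_sum.
apply: le_trans (_ : \sum_(cr | ~~ (T <= (#|Dset cr|)%:R)) T <= _).
  by apply: ler_sum => cr; rewrite -ltNge => /ltW.
apply: le_trans (_ : \sum_(cr : 'I_3 * 'I_M) T <= _).
  rewrite [X in _ <= X](bigID (fun cr => ~~ (T <= (#|Dset cr|)%:R))) /= lerDl.
  by apply: sumr_ge0.
rewrite sumr_const card_prod !card_ord -[T *+ _]mulr_natl.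
have [fle _] := floor_nat T0.
rewrite -/m in fle.
have Ts : T <= s / 4 by rewrite /T; nra.
have -> : ((3 * M)%N%:R : R) = 3%:R * (m%:R + 1%:R) by rewrite /M natrM [m.+1%:R]mulrS addrC.
have e1 : (3%:R * (m%:R + 1%:R)) * T <= 3 * (T + 1) * T.
  by apply: ler_wpM2r => //; lra.
apply: le_trans e1 _.
have e2 : 3 * (T + 1) * T <= (3/2) * s * T by nra.
apply: le_trans e2 _.
rewrite /T -ss; nra.
Qed.
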